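(* Let $(\mathfrak C,\Delta,\varepsilon)$ be an $A$-coring and $(M,\mathfrak m)$ a $\mathfrak C$-cowreath with structure maps $\xi:\mathfrak C\otimes M\to\mathfrak C$ and $\delta:\mathfrak C\otimes M\to\mathfrak C\otimes M\otimes M$. Then the $A$-bimodule $\mathfrak C\otimes M$ is an $A$-coring with comultiplication and counit $$\Delta'=(\mathfrak C\otimes\mathfrak m\otimes M)\circ(\mathfrak C\otimes\delta)\circ(\Delta\otimes M),\qquad \varepsilon'=\varepsilon\circ\xi.$$ Moreover, $\xi:\mathfrak C\otimes M\to\mathfrak C$ is a morphism of $A$-corings.
   Context: Fix a commutative ring $\mathbb K$; rings are associative unital $\mathbb K$-algebras, bimodules unital and $\mathbb K$-central. $A$ is a ring, $\otimes=\otimes_A$, canonical unit isomorphisms are suppressed, identity maps are denoted by the objects. An $A$-coring $(\mathfrak C,\Delta,\varepsilon)$ is an $A$-bimodule with $A$-bilinear $\Delta:\mathfrak C\to\mathfrak C\otimes\mathfrak C$, $\varepsilon:\mathfrak C\to A$, coassociative and counital; a morphism of $A$-corings $\phi:\mathfrak D\to\mathfrak C$ is an $A$-bilinear map with $\varepsilon_{\mathfrak C}\phi=\varepsilon_{\mathfrak D}$ and $(\phi\otimes\phi)\Delta_{\mathfrak D}=\Delta_{\mathfrak C}\phi$. The category $\mathscr R_{(\mathfrak C:A)}$ has objects $(M,\mathfrak m)$, $M$ an $A$-bimodule, $\mathfrak m:\mathfrak C\otimes M\to M\otimes\mathfrak C$ $A$-bilinear with $(M\otimes\Delta)\mathfrak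 m=(\mathfrak m\otimes\mathfrak C)(\mathfrak C\otimes\mathfrak m)(\Delta\otimes M)$ and $(M\otimes\varepsilon)\mathfrak m=\varepsilon\otimes M$; $\mathfrak C\otimes M$ is then a $\mathfrak C$-bicomodule with left coaction $\Delta\otimes M$ and right coaction $(\mathfrak C\otimes\mathfrak m)(\Delta\otimes M)$. A $\mathfrak C$-cowreath is an object $(M,\mathfrak m)$ with $\mathfrak C$-bicolinear maps $\xi:\mathfrak C\otimes M\to\mathfrak C$, $\delta:\mathfrak C\otimes M\to\mathfrak C\otimes M\otimes M$ (the latter bicomodule with left coaction $\Delta\otimes M\otimes M$ and right coaction $(\mathfrak C\otimes M\otimes\mathfrak m)(\mathfrak C\otimes\mathfrak m\otimes M)(\Delta\otimes M\otimes M)$) such that $(\xi\otimes M)\delta=\mathfrak C\otimes M$, $(M\otimes\xi)(\mathfrak m\otimes M)\delta=\mathfrak m$, $(\mathfrak m\otimes M\otimes M)(\delta\otimes M)\delta=(M\otimes\delta)(\mathfrak m\otimes M)\delta$; equivalently, a comonoid in the monoidal category $\mathscr R_{(\mathfrak C:A)}$. *)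

(* Defs.v *)
From HB Require Import structures.
From mathcomp Require Import all_boot all_algebra.
From Stdlib Require Import ClassicalEpsilon.
Set Implicit Arguments.
Unset Strict Implicit.
Unset Printing Implicit Defensive.
Import GRing.Theory.
Local Open Scope ring_scope.

Section Bimodules.
Variable A : pzRingType.

Record bimod := Bimod {
  bsort :> Type;
  badd : bsort -> bsort -> bsort;
  bzero : bsort;
  bopp : bsort -> bsort;
  blact : A -> bsort -> bsort;
  bract : bsort -> A -> bsort }.

Record is_bimod (M : bimod) : Prop := IsBimod {
  baddA : forall x y z : M, badd x (badd y z) = badd (badd x y) z;
  baddC : forall x y : M, badd x y = badd y x;
  badd0 : forall x : M, badd (bzero M) x = x;
  baddN : forall x : M, badd (bopp x) x = bzero M;
  blactD : forall a (x y : M), blact a (badd x y) = badd (blact a x) (blact a y);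
  blactDl : forall a b (x : M), blact (a + b) x = badd (blact a x) (blact b x);
  blactM : forall a b (x : M), blact (a * b) x = blact a (blact b x);
  blact1 : forall x : M, blact 1 x = x;
  bractD : forall a (x y : M), bract (badd x y) a = badd (bract x a) (bract y a);
  bractDr : forall a b (x : M), bract x (a + b) = badd (bract x a) (bract x b);
  bractM : forall a b (x : M), bract x (a * b) = bract (bract x a) b;
  bract1 : forall x : M, bract x 1 = x;
  blract : forall a b (x : M), bract (blact a x) b = blact a (bract x b) }.

Record is_hom (M N : bimod) (f : M -> N) : Prop := IsHom {
  hom_add : forall x y, f (badd x y) = badd (f x) (f y);
  hom_lact : forall a x, f (blact a x) = blact a (f x);
  hom_ract : forall x a, f (bract x a) = bract (f x) a }.

Definition Areg : bimod :=
  @Bimod A +%R 0 -%R (fun a x => a * x) (fun x a => x * a).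

Definition bsum (M : bimod) (s : seq M) : M := foldr (@badd M) (bzero M) s.

(** Tensor product over A: formal finite sums of pairs, modulo the relation
    "same value under every A-balanced biadditive map into an abelian group". *)
Section Tensor.
Variables M N : bimod.

Definition balanced_biadd (G : zmodType) (b : M -> N -> G) : Prop :=
  [/\ forall m m' n, b (badd m m') n = b m n + b m' n,
      forall m n n', b m (badd n n') = b m n + b m n' &
      forall m a n, b (bract m a) n = b m (blact a n)].

Definition tequiv (s t : seq (M * N)) : Prop :=
  forall (G : zmodType) (b : M -> N -> G), balanced_biadd b ->
    \sum_(p <- s) b p.1 p.2 = \sum_(p <- t) b p.1 p.2.

Definition tens_carrier : Type :=
  {P : seq (M * N) -> Prop | exists s, P = tequiv s}.

Definition tcls (s : seq (M * N)) : tens_carrier :=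
  exist _ (tequiv s) (ex_intro _ s erefl).

Definition trepr (x : tens_carrier) : seq (M * N) :=
  proj1_sig (constructive_indefinite_description _ (proj2_sig x)).

Definition tens : bimod :=
  @Bimod tens_carrier
    (fun x y => tcls (trepr x ++ trepr y))
    (tcls [::])
    (fun x => tcls (map (fun p => (bopp p.1, p.2)) (trepr x)))
    (fun a x => tcls (map (fun p => (blact a p.1, p.2)) (trepr x)))
    (fun x a => tcls (map (fun p => (p.1, bract p.2 a)) (trepr x))).

End Tensor.

Definition tmap (M M' N N' : bimod) (f : M -> M') (g : N -> N')
  (x : tens M N) : tens M' N' :=
  tcls (map (fun p => (f p.1, g p.2)) (trepr x)).

Definition tassoc (M N P : bimod) (x : tens (tens M N) P) : tens M (tens N P) :=
  tcls (flatten (map (fun q =>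
     map (fun r => ((r.1 : M), (tcls [:: (r.2, q.2)] : tens N P))) (trepr q.1)) (trepr x))).

Definition tassocV (M N P : bimod) (x : tens M (tens N P)) : tens (tens M N) P :=
  tcls (flatten (map (fun q =>
     map (fun r => ((tcls [:: (q.1, r.1)] : tens M N), (r.2 : P))) (trepr q.2)) (trepr x))).

Definition lunit (M : bimod) (x : tens Areg M) : M :=
  bsum (map (fun p => blact p.1 p.2) (trepr x)).

Definition runit (M : bimod) (x : tens M Areg) : M :=
  bsum (map (fun p => bract p.1 p.2) (trepr x)).

Record is_coring (C : bimod) (D : C -> tens C C) (e : C -> Areg) : Prop :=
  IsCoring {
  coring_bimod : is_bimod C;
  coring_Dhom : is_hom D;
  coring_ehom : is_hom e;
  coring_coassoc : forall x, tassoc (tmap D (@id C) (D x)) = tmap (@id C) D (D x);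
  coring_counitl : forall x, lunit (tmap e (@id C) (D x)) = x;
  coring_counitr : forall x, runit (tmap (@id C) e (D x)) = x }.

Record is_coring_hom (Dc C : bimod) (DD : Dc -> tens Dc Dc) (eD : Dc -> Areg)
    (DC : C -> tens C C) (eC : C -> Areg) (phi : Dc -> C) : Prop :=
  IsCoringHom {
  chom_hom : is_hom phi;
  chom_counit : forall x, eC (phi x) = eD x;
  chom_comul : forall x, tmap phi phi (DD x) = DC (phi x) }.

Section Cowreath.
Variables (C : bimod) (D : C -> tens C C) (e : C -> Areg).
Variables (M : bimod) (m : tens C M -> tens M C).

Record is_Robj : Prop := IsRobj {
  robj_bimod : is_bimod M;
  robj_hom : is_hom m;
  robj_comul : forall x : tens C M,
    tmap (@id M) D (m x) =
    tassoc (tmap m (@id C) (tassocV (tmap (@id C) m (tassoc (tmap D (@id M) x)))));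
  robj_counit : forall x : tens C M,
    runit (tmap (@id M) e (m x)) = lunit (tmap e (@id M) x) }.

Definition lco (x : tens C M) : tens C (tens C M) := tassoc (tmap D (@id M) x).
Definition rco (x : tens C M) : tens (tens C M) C :=
  tassocV (tmap (@id C) m (tassoc (tmap D (@id M) x))).

Definition lco2 (y : tens C (tens M M)) : tens C (tens C (tens M M)) :=
  tassoc (tmap D (@id (tens M M)) y).
Definition rco2 (y : tens C (tens M M)) : tens (tens C (tens M M)) C :=
  tassocV (tmap (@id C) (@tassocV M M C)
   (tmap (@id C) (tmap (@id M) m)
    (tmap (@id C) (@tassoc M C M)
     (tmap (@id C) (tmap m (@id M))
      (tmap (@id C) (@tassocV C M M)
       (tassoc (tmap D (@id (tens M M)) y))))))).

Record is_cowreath (xi : tens C M -> C) (delta : tens C M -> tens C (tens M M))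
    : Prop := IsCowreath {
  cw_Robj : is_Robj;
  cw_xi_hom : is_hom xi;
  cw_delta_hom : is_hom delta;
  cw_xi_lcolin : forall x, D (xi x) = tmap (@id C) xi (lco x);
  cw_xi_rcolin : forall x, D (xi x) = tmap xi (@id C) (rco x);
  cw_delta_lcolin : forall x, tmap (@id C) delta (lco x) = lco2 (delta x);
  cw_delta_rcolin : forall x, tmap delta (@id C) (rco x) = rco2 (delta x);
  cw_counitl : forall x, tmap xi (@id M) (tassocV (delta x)) = x;
  cw_counitr : forall x,
    tmap (@id M) xi (tassoc (tmap m (@id M) (tassocV (delta x)))) = m x;
  cw_coassoc : forall x,
    tassoc (tmap m (@id (tens M M))
      (tassocV (tmap (@id C) (@tassoc M M M)
        (tassoc (tmap delta (@id M) (tassocV (delta x))))))) =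
    tmap (@id M) delta (tassoc (tmap m (@id M) (tassocV (delta x)))) }.

Definition cw_comul (delta : tens C M -> tens C (tens M M)) (x : tens C M)
    : tens (tens C M) (tens C M) :=
  tassocV (tmap (@id C) (@tassoc M C M)
   (tmap (@id C) (tmap m (@id M))
    (tmap (@id C) (@tassocV C M M)
     (tmap (@id C) delta (tassoc (tmap D (@id M) x)))))).

Definition cw_counit (xi : tens C M -> C) (x : tens C M) : Areg := e (xi x).

End Cowreath.
End Bimodules.

(* Main.v *)
From HB Require Import structures.
Require Import Defs.
From mathcomp Require Import all_boot all_algebra.
From mathcomp Require Import boolp.
From Stdlib Require Import ClassicalEpsilon ProofIrrelevance FunctionalExtensionality PropExtensionality.
Set Implicit Arguments.
Unset Strict Implicit.
Unset Printing Implicit Defensive.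
Import GRing.Theory.
Local Open Scope ring_scope.


Canonical tens.

Definition MZ (A : pzRingType) (M : bimod A) (HM : is_bimod M) : Type := bsort M.
Section Z.
Variable A : pzRingType.
Variable M : bimod A.
Hypothesis HM : is_bimod M.
HB.instance Definition _ := gen_eqMixin (MZ HM).
HB.instance Definition _ := gen_choiceMixin (MZ HM).
HB.instance Definition _ := GRing.isZmodule.Build (MZ HM) (baddA HM) (baddC HM) (badd0 HM) (baddN HM).
End Z.

Lemma zidem (G : zmodType) (x : G) : x = x + x -> x = 0.
Proof. by move=> h; have := congr1 (fun z => z - x) h; rewrite subrr addrK. Qed.

Section Basic.
Variable A : pzRingType.
Local Notation bimod := (bimod A).

Lemma exist_eq (T : Type) (Pr : T -> Prop) (P Q : T) (p : Pr P) (q : Pr Q) :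
  P = Q -> exist Pr P p = exist Pr Q q.
Proof. move=> E; subst Q; f_equal; apply: proof_irrelevance. Qed.

Section TE.
Variables X Y : bimod.
Implicit Types s t u : seq (X * Y).

Lemma tequiv_refl s : tequiv s s. Proof. by []. Qed.
Lemma tequiv_sym s t : tequiv s t -> tequiv t s.
Proof. by move=> h G b hb; rewrite (h G b hb). Qed.
Lemma tequiv_trans s t u : tequiv s t -> tequiv t u -> tequiv s u.
Proof. by move=> h1 h2 G b hb; rewrite (h1 G b hb) (h2 G b hb). Qed.
Lemma tequiv_cat s1 s2 t1 t2 : tequiv s1 t1 -> tequiv s2 t2 ->
  tequiv (s1 ++ s2) (t1 ++ t2).
Proof. by move=> h1 h2 G b hb; rewrite !big_cat /= (h1 G b hb) (h2 G b hb). Qed.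

Lemma trepr_equiv s : tequiv (trepr (tcls s)) s.
Proof.
rewrite /trepr /=; case: constructive_indefinite_description => r /= Hr.
by rewrite -Hr.
Qed.

Lemma tcls_trepr (x : tens X Y) : tcls (trepr x) = x.
Proof.
case: x => P HP; rewrite /trepr /tcls /=.
case: constructive_indefinite_description => r Hr /=; subst P.
exact: exist_eq.
Qed.

Lemma tcls_eq s t : tequiv s t -> tcls s = tcls t.
Proof.
move=> h; apply: exist_eq; apply: functional_extensionality => u.
apply: propositional_extensionality; split => h'.
  exact: tequiv_trans (tequiv_sym h) h'.
exact: tequiv_trans h h'.
Qed.

Lemma tcls_inj s t : tcls s = tcls t -> tequiv s t.
Proof. by move/(f_equal (@proj1_sig _ _)) => /= ->. Qed.

Lemma tens_rep (x : tens X Y) : exists s, x = tcls s.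
Proof. by exists (trepr x); rewrite tcls_trepr. Qed.
End TE.

Definition radd (X X' : bimod) (f : X -> X') :=
  (forall x y, f (badd x y) = badd (f x) (f y)) /\ forall x a, f (bract x a) = bract (f x) a.
Definition ladd (X X' : bimod) (f : X -> X') :=
  (forall x y, f (badd x y) = badd (f x) (f y)) /\ forall a x, f (blact a x) = blact a (f x).

Lemma bal_map (X Y X' Y' : bimod) (f : X -> X') (g : Y -> Y') (G : zmodType)
  (b : X' -> Y' -> G) : radd f -> ladd g -> balanced_biadd b ->
  balanced_biadd (fun x y => b (f x) (g y)).
Proof.
move=> [fa fr] [ga gl] [b1 b2 b3]; split=> *.
- by rewrite fa b1.
- by rewrite ga b2.
- by rewrite fr gl b3.
Qed.

Lemma tequiv_map (X Y X' Y' : bimod) (f : X -> X') (g : Y -> Y') s t :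
  radd f -> ladd g -> tequiv s t ->
  tequiv (map (fun p => (f p.1, g p.2)) s) (map (fun p => (f p.1, g p.2)) t).
Proof.
move=> hf hg h G b hb; rewrite !big_map /=.
exact: (h G _ (bal_map hf hg hb)).
Qed.

Lemma tmapE (X Y X' Y' : bimod) (f : X -> X') (g : Y -> Y') s :
  radd f -> ladd g -> tmap f g (tcls s) = tcls (map (fun p => (f p.1, g p.2)) s).
Proof. by move=> hf hg; apply: tcls_eq; apply: tequiv_map => //; apply: trepr_equiv. Qed.

Lemma baddE (X Y : bimod) (s t : seq (X * Y)) :
  badd (tcls s) (tcls t) = tcls (s ++ t).
Proof. by apply: tcls_eq; apply: tequiv_cat; apply: trepr_equiv. Qed.

Lemma bzeroE (X Y : bimod) : bzero (tens X Y) = tcls [::].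
Proof. by []. Qed.
End Basic.


Section Grp.
Variable A : pzRingType.
Local Notation bimod := (bimod A).

Section OneB.
Variables (X : bimod) (HX : is_bimod X).
Local Notation Z := (MZ HX).

Lemma boppD (x y : X) : bopp (badd x y) = badd (bopp x) (bopp y).
Proof. exact (@opprD Z x y). Qed.

Lemma bract0 a : bract (bzero X) a = bzero X.
Proof.
have h := bractD HX a (bzero X) (bzero X); rewrite (badd0 HX) in h.
exact (@zidem Z _ h).
Qed.
Lemma blact0 a : blact a (bzero X) = bzero X.
Proof.
have h := blactD HX a (bzero X) (bzero X); rewrite (badd0 HX) in h.
exact (@zidem Z _ h).
Qed.
Lemma bractN (x : X) a : bract (bopp x) a = bopp (bract x a).
Proof.
have h : (bract (bopp x) a : Z) + bract x a = 0.
  by have := bractD HX a (bopp x) x; rewrite (baddN HX) bract0 => h; exact (esym h).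
have e : (bract (bopp x) a : Z) = - (bract x a : Z) by apply/eqP; rewrite -addr_eq0 h.
exact e.
Qed.
Lemma blactN a (x : X) : blact a (bopp x) = bopp (blact a x).
Proof.
have h : (blact a (bopp x) : Z) + blact a x = 0.
  by have := blactD HX a (bopp x) x; rewrite (baddN HX) blact0 => h; exact (esym h).
have e : (blact a (bopp x) : Z) = - (blact a x : Z) by apply/eqP; rewrite -addr_eq0 h.
exact e.
Qed.

Lemma radd_opp : radd (@bopp _ X).
Proof. split=> *; [exact: boppD | by rewrite bractN]. Qed.
Lemma radd_lact a : radd (blact a : X -> X).
Proof. split=> *; [exact: (blactD HX) | by rewrite (blract HX)]. Qed.
Lemma ladd_ract a : ladd (fun x : X => bract x a).
Proof. split=> *; [exact: (bractD HX) | by rewrite (blract HX)]. Qed.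
End OneB.

Lemma radd_id (X : bimod) : radd (fun x : X => x).
Proof. by []. Qed.
Lemma ladd_id (X : bimod) : ladd (fun x : X => x).
Proof. by []. Qed.
Lemma radd_hom (X Y : bimod) (f : X -> Y) : is_hom f -> radd f.
Proof. by case. Qed.
Lemma ladd_hom (X Y : bimod) (f : X -> Y) : is_hom f -> ladd f.
Proof. by case. Qed.

Section Bal.
Variables (X Y : bimod) (HX : is_bimod X) (HY : is_bimod Y) (G : zmodType)
  (b : X -> Y -> G) (hb : balanced_biadd b).
Lemma bal0l y : b (bzero X) y = 0.
Proof. case: hb => h1 _ _; apply: zidem; by rewrite -h1 (badd0 HX). Qed.
Lemma bal0r x : b x (bzero Y) = 0.
Proof. case: hb => _ h2 _; apply: zidem; by rewrite -h2 (badd0 HY). Qed.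
Lemma balNl x y : b (bopp x) y = - b x y.
Proof.
case: hb => h1 _ _; apply/eqP; rewrite -addr_eq0 -h1 (baddN HX); exact/eqP/bal0l.
Qed.
End Bal.

Section TensOps.
Variables (X Y : bimod) (HX : is_bimod X) (HY : is_bimod Y).
Implicit Types s : seq (X * Y).

Lemma boppE s : bopp (tcls s) = tcls (map (fun p => (bopp p.1, p.2)) s).
Proof. exact: (tmapE s (radd_opp HX) (ladd_id _)). Qed.
Lemma blactE a s : blact a (tcls s) = tcls (map (fun p => (blact a p.1, p.2)) s).
Proof. exact: (tmapE s (radd_lact HX a) (ladd_id _)). Qed.
Lemma bractE a s : bract (tcls s) a = tcls (map (fun p => (p.1, bract p.2 a)) s).
Proof. exact: (tmapE s (radd_id _) (ladd_ract HY a)). Qed.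

Lemma tens_bimod : is_bimod (tens X Y).
Proof.
split.
- move=> x y z; case: (tens_rep x) => sx ->; case: (tens_rep y) => sy ->.
  case: (tens_rep z) => sz ->; by rewrite !baddE catA.
- move=> x y; case: (tens_rep x) => sx ->; case: (tens_rep y) => sy ->.
  rewrite !baddE; apply: tcls_eq => G b hb; by rewrite !big_cat /=; exact: addrC.
- move=> x; case: (tens_rep x) => sx ->; by rewrite bzeroE baddE.
- move=> x; case: (tens_rep x) => sx ->; rewrite boppE bzeroE baddE.
  apply: tcls_eq => G b hb; rewrite big_cat big_map big_nil /= -big_split /=.
  by apply: big1 => p _; rewrite (balNl HX hb) addNr.
- move=> a x y; case: (tens_rep x) => sx ->; case: (tens_rep y) => sy ->.
  by rewrite (blactE a sx) (blactE a sy) !baddE blactE map_cat.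
- move=> a c x; case: (tens_rep x) => sx ->; rewrite !blactE baddE.
  apply: tcls_eq => G b [h1 h2 h3]; rewrite big_cat !big_map /= -big_split /=.
  by apply: eq_bigr => p _; rewrite (blactDl HX) h1.
- move=> a c x; case: (tens_rep x) => sx ->; rewrite !blactE -map_comp.
  by apply: congr1; apply: eq_map => p /=; rewrite (blactM HX).
- move=> x; case: (tens_rep x) => sx ->; rewrite !blactE.
  by apply: congr1; rewrite -[RHS]map_id; apply: eq_map => -[p q] /=; rewrite (blact1 HX).
- move=> a x y; case: (tens_rep x) => sx ->; case: (tens_rep y) => sy ->.
  by rewrite (bractE a sx) (bractE a sy) !baddE bractE map_cat.
- move=> a c x; case: (tens_rep x) => sx ->; rewrite !bractE baddE.
  apply: tcls_eq => G b [h1 h2 h3]; rewrite big_cat !big_map /= -big_split /=.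
  by apply: eq_bigr => p _; rewrite (bractDr HY) h2.
- move=> a c x; case: (tens_rep x) => sx ->; rewrite !bractE -map_comp.
  by apply: congr1; apply: eq_map => p /=; rewrite (bractM HY).
- move=> x; case: (tens_rep x) => sx ->; rewrite !bractE.
  by apply: congr1; rewrite -[RHS]map_id; apply: eq_map => -[p q] /=; rewrite (bract1 HY).
- move=> a c x; case: (tens_rep x) => sx ->; rewrite blactE !bractE blactE -!map_comp.
  by [].
Qed.
End TensOps.
End Grp.


Section Elem.
Variable A : pzRingType.
Local Notation bimod := (bimod A).

Definition te (X Y : bimod) (x : X) (y : Y) : tens X Y := tcls [:: (x, y)].

Lemma tmap_te (X Y X' Y' : bimod) (f : X -> X') (g : Y -> Y') x y :
  radd f -> ladd g -> tmap f g (te x y) = te (f x) (g y).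
Proof. by move=> hf hg; rewrite /te tmapE. Qed.

Lemma te_addl (X Y : bimod) (x x' : X) (y : Y) :
  te (badd x x') y = badd (te x y) (te x' y).
Proof. rewrite /te baddE; apply: tcls_eq => G b [h1 h2 h3]; by rewrite !big_cons !big_nil /= h1 !addr0. Qed.
Lemma te_addr (X Y : bimod) (x : X) (y y' : Y) :
  te x (badd y y') = badd (te x y) (te x y').
Proof. rewrite /te baddE; apply: tcls_eq => G b [h1 h2 h3]; by rewrite !big_cons !big_nil /= h2 !addr0. Qed.
Lemma te_bal (X Y : bimod) (x : X) a (y : Y) :
  te (bract x a) y = te x (blact a y).
Proof. rewrite /te; apply: tcls_eq => G b [h1 h2 h3]; by rewrite !big_cons !big_nil /= h3. Qed.
Lemma blact_te (X Y : bimod) (HX : is_bimod X) a (x : X) (y : Y) :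
  blact a (te x y) = te (blact a x) y.
Proof. by rewrite /te (blactE HX). Qed.
Lemma bract_te (X Y : bimod) (HY : is_bimod Y) a (x : X) (y : Y) :
  bract (te x y) a = te x (bract y a).
Proof. by rewrite /te (bractE HY). Qed.

Lemma radd_te (X Y : bimod) (HY : is_bimod Y) (x : X) : radd (fun y : Y => te x y).
Proof. by split=> *; [exact: te_addr | rewrite bract_te]. Qed.
Lemma ladd_te (X Y : bimod) (HX : is_bimod X) (y : Y) : ladd (fun x : X => te x y).
Proof. by split=> *; [exact: te_addl | rewrite blact_te]. Qed.

Lemma bsum_te (X Y : bimod) (s : seq (X * Y)) :
  bsum (map (fun p => te p.1 p.2) s) = tcls s.
Proof.
elim: s => [|p s IH] //.
have -> : bsum (map (fun p => te p.1 p.2) (p :: s)) =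
  badd (te p.1 p.2) (bsum (map (fun p => te p.1 p.2) s)) by [].
rewrite IH /te baddE; by case: p.
Qed.

Definition additive_b (X Y : bimod) (F : X -> Y) :=
  forall u v, F (badd u v) = badd (F u) (F v).

Lemma tens_ext (X Y Z : bimod) (HZ : is_bimod Z) (F G : tens X Y -> Z) :
  additive_b F -> additive_b G -> (forall x y, F (te x y) = G (te x y)) ->
  forall u, F u = G u.
Proof.
move=> hF hG hte.
have z0 : forall H : tens X Y -> Z, additive_b H -> H (bzero _) = bzero Z.
  move=> H hH; have := hH (bzero _) (bzero _); rewrite bzeroE baddE /= => h.
  exact (@zidem (MZ HZ) _ h).
move=> u; case: (tens_rep u) => s ->; rewrite -bsum_te.
elim: s => [|p s IH]; first by rewrite /= (z0 _ hF) (z0 _ hG).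
have -> : bsum (map (fun p => te p.1 p.2) (p :: s)) =
  badd (te p.1 p.2) (bsum (map (fun p => te p.1 p.2) s)) by [].
by rewrite hF hG IH hte.
Qed.

Lemma tmap_add (X Y X' Y' : bimod) (f : X -> X') (g : Y -> Y') :
  radd f -> ladd g -> additive_b (tmap f g).
Proof.
move=> hf hg u v; case: (tens_rep u) => su ->; case: (tens_rep v) => sv ->.
by rewrite baddE !tmapE // baddE map_cat.
Qed.

Lemma tmap_blact (X Y X' Y' : bimod) (HX : is_bimod X) (HX' : is_bimod X')
  (f : X -> X') (g : Y -> Y') a u :
  radd f -> ladd g -> (forall x, f (blact a x) = blact a (f x)) ->
  tmap f g (blact a u) = blact a (tmap f g u).
Proof.
move=> hf hg hl; case: (tens_rep u) => s ->.
rewrite (blactE HX) !tmapE // (blactE HX') -!map_comp.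
by apply: congr1; apply: eq_map => p /=; rewrite hl.
Qed.

Lemma tmap_bract (X Y X' Y' : bimod) (HY : is_bimod Y) (HY' : is_bimod Y')
  (f : X -> X') (g : Y -> Y') a u :
  radd f -> ladd g -> (forall y, g (bract y a) = bract (g y) a) ->
  tmap f g (bract u a) = bract (tmap f g u) a.
Proof.
move=> hf hg hl; case: (tens_rep u) => s ->.
rewrite (bractE HY) !tmapE // (bractE HY') -!map_comp.
by apply: congr1; apply: eq_map => p /=; rewrite hl.
Qed.

Lemma tmap_hom (X Y X' Y' : bimod) (HX : is_bimod X) (HX' : is_bimod X')
  (HY : is_bimod Y) (HY' : is_bimod Y') (f : X -> X') (g : Y -> Y') :
  is_hom f -> is_hom g -> is_hom (tmap f g).
Proof.
move=> hf hg; have rf := radd_hom hf; have lg := ladd_hom hg.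
split.
- exact: tmap_add.
- move=> a x; apply: tmap_blact => // ?; exact: (hom_lact hf).
- move=> x a; apply: tmap_bract => // ?; exact: (hom_ract hg).
Qed.

Lemma radd_comp (X Y Z : bimod) (f : X -> Y) (g : Y -> Z) :
  radd f -> radd g -> radd (g \o f).
Proof. by move=> [f1 f2] [g1 g2]; split=> * /=; rewrite ?f1 ?g1 ?f2 ?g2. Qed.
Lemma ladd_comp (X Y Z : bimod) (f : X -> Y) (g : Y -> Z) :
  ladd f -> ladd g -> ladd (g \o f).
Proof. by move=> [f1 f2] [g1 g2]; split=> * /=; rewrite ?f1 ?g1 ?f2 ?g2. Qed.
Lemma hom_comp (X Y Z : bimod) (f : X -> Y) (g : Y -> Z) :
  is_hom f -> is_hom g -> is_hom (g \o f).
Proof. by move=> [f1 f2 f3] [g1 g2 g3]; split=> * /=; rewrite ?f1 ?g1 ?f2 ?g2 ?f3 ?g3. Qed.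
Lemma hom_id (X : bimod) : is_hom (fun x : X => x).
Proof. by []. Qed.

Lemma tmap_comp (X Y X' Y' X'' Y'' : bimod) (f : X -> X') (g : Y -> Y')
  (f' : X' -> X'') (g' : Y' -> Y'') u :
  radd f -> ladd g -> radd f' -> ladd g' ->
  tmap f' g' (tmap f g u) = tmap (f' \o f) (g' \o g) u.
Proof.
move=> hf hg hf' hg'; case: (tens_rep u) => s ->.
by rewrite (tmapE _ hf hg) (tmapE _ hf' hg') (tmapE _ (radd_comp hf hf') (ladd_comp hg hg')) -map_comp.
Qed.

Lemma tmap_id (X Y : bimod) (u : tens X Y) : tmap id id u = u.
Proof.
rewrite -[RHS]tcls_trepr /tmap; congr tcls.
by elim: (trepr u) => //= -[a b] s ->.
Qed.

Lemma tmap_ext (X Y X' Y' : bimod) (f f' : X -> X') (g g' : Y -> Y') u :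
  (forall x, f x = f' x) -> (forall y, g y = g' y) -> tmap f g u = tmap f' g' u.
Proof. by move=> h1 h2; rewrite /tmap; apply: congr1; apply: eq_map => p; rewrite h1 h2. Qed.

End Elem.


Section Assoc.
Variable A : pzRingType.
Local Notation bimod := (bimod A).

Section AS.
Variables (X Y Z : bimod) (HX : is_bimod X) (HY : is_bimod Y) (HZ : is_bimod Z).

Section Beta.
Variables (G : zmodType) (b : X -> tens Y Z -> G) (hb : balanced_biadd b).
Lemma bal_inner (z : Z) : balanced_biadd (fun x (y : Y) => b x (te y z)).
Proof.
case: hb => h1 h2 h3; split=> *; first by rewrite h1.
  by rewrite te_addl h2.
by rewrite h3 blact_te.
Qed.
Definition beta (u : tens X Y) (z : Z) := \sum_(r <- trepr u) b r.1 (te r.2 z).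
Lemma bal_beta : balanced_biadd beta.
Proof.
have [h1 h2 h3] := hb; split; rewrite /beta.
- move=> m m' n; transitivity (\sum_(r <- trepr m ++ trepr m') b r.1 (te r.2 n)).
    exact (trepr_equiv (trepr m ++ trepr m') (bal_inner n)).
  by rewrite big_cat.
- by move=> *; rewrite -big_split; apply: eq_bigr => r _; rewrite te_addr h2.
- move=> m a n; transitivity (\sum_(r <- map (fun p => (p.1, bract p.2 a)) (trepr m)) b r.1 (te r.2 n)).
    exact (trepr_equiv (map (fun p => (p.1, bract p.2 a)) (trepr m)) (bal_inner n)).
  by rewrite big_map; apply: eq_bigr => r _ /=; rewrite te_bal.
Qed.
End Beta.

Lemma tassocE (s : seq (tens X Y * Z)) :
  tassoc (tcls s) = tcls (flatten (map (fun q => map (fun r => (r.1, te r.2 q.2)) (trepr q.1)) s)).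
Proof.
apply: tcls_eq => G b hb; rewrite !big_flatten /= !big_map.
have := trepr_equiv s (bal_beta hb); rewrite /beta => h.
rewrite (eq_bigr (fun q => \sum_(r <- trepr q.1) b r.1 (te r.2 q.2))); last first.
  by move=> q _; rewrite big_map.
rewrite h; apply: eq_bigr => q _; by rewrite big_map.
Qed.

Lemma tassoc_add : additive_b (@tassoc _ X Y Z).
Proof.
move=> u v; case: (tens_rep u) => su ->; case: (tens_rep v) => sv ->.
by rewrite baddE !tassocE baddE map_cat flatten_cat.
Qed.

Lemma tassoc_te (w : tens X Y) (z : Z) : tassoc (te w z) = tmap id (fun y => te y z) w.
Proof. by rewrite /te tassocE /= cats0. Qed.

Lemma tassoc_tt (x : X) (y : Y) (z : Z) : tassoc (te (te x y) z) = te x (te y z).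
Proof. rewrite tassoc_te tmap_te //; try exact: radd_id; exact: ladd_te. Qed.

Section Gamma.
Variables (G : zmodType) (b : tens X Y -> Z -> G) (hb : balanced_biadd b).
Lemma bal_innerV (x : X) : balanced_biadd (fun (y : Y) (z : Z) => b (te x y) z).
Proof.
case: hb => h1 h2 h3; split=> *; first by rewrite te_addr h1.
  by rewrite h2.
by rewrite -h3 bract_te.
Qed.
Definition gamma (x : X) (w : tens Y Z) := \sum_(r <- trepr w) b (te x r.1) r.2.
Lemma bal_gamma : balanced_biadd gamma.
Proof.
have [h1 h2 h3] := hb; split; rewrite /gamma.
- by move=> *; rewrite -big_split; apply: eq_bigr => r _; rewrite te_addl h1.
- move=> m n n'; transitivity (\sum_(r <- trepr n ++ trepr n') b (te m r.1) r.2).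
    exact (trepr_equiv (trepr n ++ trepr n') (bal_innerV m)).
  by rewrite big_cat.
- move=> m a n; symmetry.
  transitivity (\sum_(r <- map (fun p => (blact a p.1, p.2)) (trepr n)) b (te m r.1) r.2).
    exact (trepr_equiv (map (fun p => (blact a p.1, p.2)) (trepr n)) (bal_innerV m)).
  by rewrite big_map; apply: eq_bigr => r _ /=; rewrite te_bal.
Qed.
End Gamma.

Lemma tassocVE (s : seq (X * tens Y Z)) :
  tassocV (tcls s) = tcls (flatten (map (fun q => map (fun r => (te q.1 r.1, r.2)) (trepr q.2)) s)).
Proof.
apply: tcls_eq => G b hb; rewrite !big_flatten /= !big_map.
have := trepr_equiv s (bal_gamma hb); rewrite /gamma => h.
rewrite (eq_bigr (fun q => \sum_(r <- trepr q.2) b (te q.1 r.1) r.2)); last first.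
  by move=> q _; rewrite big_map.
rewrite h; apply: eq_bigr => q _; by rewrite big_map.
Qed.

Lemma tassocV_add : additive_b (@tassocV _ X Y Z).
Proof.
move=> u v; case: (tens_rep u) => su ->; case: (tens_rep v) => sv ->.
by rewrite baddE !tassocVE baddE map_cat flatten_cat.
Qed.

Lemma tassocV_te (x : X) (w : tens Y Z) : tassocV (te x w) = tmap (fun y => te x y) id w.
Proof. by rewrite /te tassocVE /= cats0. Qed.

Lemma tassocV_tt (x : X) (y : Y) (z : Z) : tassocV (te x (te y z)) = te (te x y) z.
Proof. rewrite tassocV_te tmap_te //; try exact: ladd_id; exact: radd_te. Qed.

End AS.
End Assoc.


Section Units.
Variable A : pzRingType.
Local Notation bimod := (bimod A).

Lemma Areg_bimod : is_bimod (Areg A).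
Proof.
split=> *; rewrite /= ?addrA ?mulrA //.
- exact: addrC.
- exact: add0r.
- exact: addNr.
- exact: mulrDr.
- exact: mulrDl.
- exact: mul1r.
- exact: mulrDl.
- exact: mulrDr.
- exact: mulr1.
Qed.

Lemma bsum_sum (N : bimod) (HN : is_bimod N) (T : Type) (f : T -> N) s :
  bsum (map f s) = \sum_(p <- s) (f p : MZ HN).
Proof. by elim: s => [|p s IH]; rewrite ?big_nil // big_cons -IH. Qed.

Lemma bsum_cat (N : bimod) (HN : is_bimod N) (s t : seq N) :
  bsum (s ++ t) = badd (bsum s) (bsum t).
Proof.
have := bsum_sum HN (fun x => x) (s ++ t); rewrite map_id big_cat /= => ->.
by rewrite -!(bsum_sum HN (fun x => x)) !map_id.
Qed.

Section LU.
Variables (N : bimod) (HN : is_bimod N).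
Lemma bal_lact : balanced_biadd (fun (a : Areg A) (v : N) => (blact a v : MZ HN)).
Proof. split=> *; [exact: (blactDl HN) | exact: (blactD HN) | exact: (blactM HN)]. Qed.

Lemma lunitE (s : seq (Areg A * N)) : lunit (tcls s) = bsum (map (fun p => blact p.1 p.2) s).
Proof. rewrite /lunit !(bsum_sum HN); exact (trepr_equiv s bal_lact). Qed.

Lemma lunit_te a (v : N) : lunit (te (a : Areg A) v) = blact a v.
Proof. rewrite /te lunitE /=; exact (badd0 HN _ ) || exact (@addr0 (MZ HN) _). Qed.

Lemma lunitD (u v : tens (Areg A) N) : lunit (badd u v) = badd (lunit u) (lunit v).
Proof.
case: (tens_rep u) => su ->; case: (tens_rep v) => sv ->.
by rewrite baddE !lunitE map_cat (bsum_cat HN).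
Qed.

Lemma bal_ract : balanced_biadd (fun (v : N) (a : Areg A) => (bract v a : MZ HN)).
Proof. split=> *; [exact: (bractD HN) | exact: (bractDr HN) | exact: (esym (bractM HN _ _ _))]. Qed.

Lemma runitE (s : seq (N * Areg A)) : runit (tcls s) = bsum (map (fun p => bract p.1 p.2) s).
Proof. rewrite /runit !(bsum_sum HN); exact (trepr_equiv s bal_ract). Qed.

Lemma runit_te a (v : N) : runit (te v (a : Areg A)) = bract v a.
Proof. rewrite /te runitE /=; exact (@addr0 (MZ HN) _). Qed.

Lemma runitD (u v : tens N (Areg A)) : runit (badd u v) = badd (runit u) (runit v).
Proof.
case: (tens_rep u) => su ->; case: (tens_rep v) => sv ->.
by rewrite baddE !runitE map_cat (bsum_cat HN).
Qed.
End LU.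
End Units.


Section Eqs.
Variable A : pzRingType.
Local Notation bimod := (bimod A).
Lemma tmapD (X Y X' Y' : bimod) (f : X -> X') (g : Y -> Y') u v :
  radd f -> ladd g -> tmap f g (badd u v) = badd (tmap f g u) (tmap f g v).
Proof. by move=> hf hg; apply: tmap_add. Qed.
Lemma tassocD (X Y Z : bimod) (HY : is_bimod Y) (u v : tens (tens X Y) Z) :
  tassoc (badd u v) = badd (tassoc u) (tassoc v).
Proof. exact: tassoc_add. Qed.
Lemma tassocVD (X Y Z : bimod) (HY : is_bimod Y) (u v : tens X (tens Y Z)) :
  tassocV (badd u v) = badd (tassocV u) (tassocV v).
Proof. exact: tassocV_add. Qed.
Lemma blactDb (M : bimod) (HM : is_bimod M) a (x y : M) :
  blact a (badd x y) = badd (blact a x) (blact a y).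
Proof. exact: blactD. Qed.
Lemma bractDb (M : bimod) (HM : is_bimod M) a (x y : M) :
  bract (badd x y) a = badd (bract x a) (bract y a).
Proof. exact: bractD. Qed.
Lemma radd_idf (X : bimod) : radd (@id X). Proof. by []. Qed.
Lemma ladd_idf (X : bimod) : ladd (@id X). Proof. by []. Qed.
Lemma hom_idf (X : bimod) : is_hom (@id X). Proof. by []. Qed.
End Eqs.

Create HintDb tens.
#[export] Hint Resolve tens_bimod Areg_bimod radd_hom ladd_hom radd_id ladd_id
  radd_idf ladd_idf hom_idf hom_id radd_te ladd_te radd_comp ladd_comp hom_comp tmap_hom : tens.

Ltac tside := solve [auto 12 with tens].
Ltac astep := first
  [ rewrite tmapD; [ | tside | tside]
  | rewrite tassocD; [ | tside ..]
  | rewrite tassocVD; [ | tside ..]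
  | rewrite te_addl
  | rewrite te_addr
  | rewrite lunitD; [ | tside ..]
  | rewrite runitD; [ | tside ..]
  | rewrite blactDb; [ | tside ..]
  | rewrite bractDb; [ | tside ..]
  | match goal with |- context [?f (badd ?x ?y)] =>
      match goal with H : is_hom f |- _ => rewrite (hom_add H x y) end end ].
Lemma compE (T1 T2 T3 : Type) (f : T2 -> T3) (g : T1 -> T2) x : (f \o g) x = f (g x).
Proof. by []. Qed.
Ltac bet := cbv beta; rewrite ?compE; cbv beta.
Ltac tadd := let u := fresh "u" in let v := fresh "v" in
  move=> u v; bet; repeat astep; reflexivity.
Ltac cstep := first
  [ rewrite tmap_te; [ | tside | tside]
  | rewrite tassoc_tt; [ | tside ..]
  | rewrite tassocV_tt; [ | tside ..]
  | rewrite lunit_te; [ | tside ..]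
  | rewrite runit_te; [ | tside ..]
  | rewrite bract_te; [ | tside ..]
  | rewrite blact_te; [ | tside ..] ].
Ltac tcomp := bet; repeat (cstep; bet).
Ltac text := apply: tens_ext; [ tside | tadd | tadd | ].

Section Homs.
Variable A : pzRingType.
Local Notation bimod := (bimod A).
Variables (X Y Z : bimod) (HX : is_bimod X) (HY : is_bimod Y) (HZ : is_bimod Z).

Lemma hom_tassoc : is_hom (@tassoc _ X Y Z).
Proof.
split.
- exact: tassoc_add.
- move=> a; text => w z.
  rewrite blact_te; last tside.
  rewrite !tassoc_te //; apply: tmap_blact => //; tside.
- move=> u a; move: u; text => w z.
  rewrite bract_te // !tassoc_te //.
  move: w; text => x y; by tcomp.
Qed.

Lemma hom_tassocV : is_hom (@tassocV _ X Y Z).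
Proof.
split.
- exact: tassocV_add.
- move=> a u; move: u; text => x w.
  rewrite blact_te // !tassocV_te //.
  move: w; text => y z; by tcomp.
- move=> u a; move: u; text => x w.
  rewrite bract_te; last tside.
  rewrite !tassocV_te //; apply: tmap_bract => //; tside.
Qed.
End Homs.

Section UHom.
Variable A : pzRingType.
Variables (N : bimod A) (HN : is_bimod N).
Lemma hom_lunit : is_hom (@lunit _ N).
Proof.
split.
- exact: lunitD.
- move=> a u; move: u; text => c v; tcomp; exact: blactM.
- move=> u a; move: u; text => c v; tcomp; exact: esym (blract _ _ _ _).
Qed.
Lemma hom_runit : is_hom (@runit _ N).
Proof.
split.
- exact: runitD.
- move=> a u; move: u; text => c v; tcomp; exact: blract.
- move=> u a; move: u; text => c v; tcomp; exact: bractM.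
Qed.
End UHom.
#[export] Hint Resolve hom_tassoc hom_tassocV hom_lunit hom_runit : tens.

Lemma ladd_tmap (A : pzRingType) (X Y X' Y' : bimod A) (HX : is_bimod X) (HX' : is_bimod X')
  (f : X -> X') (g : Y -> Y') : is_hom f -> ladd g -> ladd (tmap f g).
Proof.
move=> hf hg; have rf := radd_hom hf; split; first exact: tmap_add.
move=> a u; apply: tmap_blact => // ?; exact: (hom_lact hf).
Qed.
Lemma radd_tmap (A : pzRingType) (X Y X' Y' : bimod A) (HY : is_bimod Y) (HY' : is_bimod Y')
  (f : X -> X') (g : Y -> Y') : radd f -> is_hom g -> radd (tmap f g).
Proof.
move=> hf hg; have lg := ladd_hom hg; split; first exact: tmap_add.
move=> u a; apply: tmap_bract => // ?; exact: (hom_ract hg).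
Qed.
#[export] Hint Resolve ladd_tmap radd_tmap : tens.


Section Gen.
Variable A : pzRingType.
Local Notation bimod := (bimod A).
Lemma tcompR (X Y Y' Y'' : bimod) (g : Y -> Y') (g' : Y' -> Y'') (u : tens X Y) :
  ladd g -> ladd g' -> tmap id g' (tmap id g u) = tmap id (g' \o g) u.
Proof. move=> h1 h2; rewrite tmap_comp //; exact: radd_idf. Qed.
Lemma tcompL (X X' X'' Y : bimod) (f : X -> X') (f' : X' -> X'') (u : tens X Y) :
  radd f -> radd f' -> tmap f' id (tmap f id u) = tmap (f' \o f) id u.
Proof. move=> h1 h2; rewrite tmap_comp //; exact: ladd_idf. Qed.
Lemma tsplit (X X' Y Y' : bimod) (f : X -> X') (g : Y -> Y') (u : tens X Y) :
  radd f -> ladd g -> tmap f g u = tmap f id (tmap id g u).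
Proof. move=> h1 h2; rewrite tmap_comp //; exact: radd_idf || exact: ladd_idf. Qed.

Lemma SL5 (X X' Y Z : bimod) (HX : is_bimod X) (HX' : is_bimod X') (HY : is_bimod Y)
  (HZ : is_bimod Z) (f : X -> X') (w : tens (tens X Y) Z) :
  is_hom f -> tmap f id (tassoc w) = tassoc (tmap (tmap f id) id w).
Proof.
move=> hf; move: w; text => u z; move: u; text => x y; by tcomp.
Qed.

Lemma SL2 (X Y Z Z' : bimod) (HX : is_bimod X) (HY : is_bimod Y) (HZ : is_bimod Z)
  (HZ' : is_bimod Z') (h : Z -> Z') (w : tens X (tens Y Z)) :
  is_hom h -> tmap id h (tassocV w) = tassocV (tmap id (tmap id h) w).
Proof.
move=> hh; move: w; text => x v; move: v; text => y z; by tcomp.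
Qed.

Lemma SL6 (X Y Z : bimod) (HX : is_bimod X) (HY : is_bimod Y) (HZ : is_bimod Z)
  (e : X -> Areg A) (w : tens (tens X Y) Z) :
  is_hom e -> lunit (tmap e id (tassoc w)) = tmap (@lunit _ _ \o tmap e id) id w.
Proof.
move=> he; move: w; text => u z; move: u; text => x y; by tcomp.
Qed.

Lemma SL7 (X Y Z : bimod) (HX : is_bimod X) (HY : is_bimod Y) (HZ : is_bimod Z)
  (e : Z -> Areg A) (w : tens X (tens Y Z)) :
  is_hom e -> runit (tmap id e (tassocV w)) = tmap id (@runit _ _ \o tmap id e) w.
Proof.
move=> he; move: w; text => x v; move: v; text => y z; by tcomp.
Qed.

Lemma SL8 (X Y Z : bimod) (HX : is_bimod X) (HY : is_bimod Y) (HZ : is_bimod Z)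
  (e : Y -> Areg A) (w : tens (tens X Y) Z) :
  is_hom e -> tmap id (@lunit _ _ \o tmap e id) (tassoc w) = tmap (@runit _ _ \o tmap id e) id w.
Proof.
move=> he; move: w; text => u z; move: u; text => x y; tcomp.
by rewrite te_bal.
Qed.
End Gen.

Section Gen2.
Variable A : pzRingType.
Local Notation bimod := (bimod A).
Local Notation aV := (@tassocV A _ _ _).
Local Notation aa := (@tassoc A _ _ _).

Lemma tassocVK (X Y Z : bimod) (HX : is_bimod X) (HY : is_bimod Y) (HZ : is_bimod Z)
  (w : tens (tens X Y) Z) : tassocV (tassoc w) = w.
Proof. move: w; text => u z; move: u; text => x y; by tcomp. Qed.
Lemma tassocK (X Y Z : bimod) (HX : is_bimod X) (HY : is_bimod Y) (HZ : is_bimod Z)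
  (w : tens X (tens Y Z)) : tassoc (tassocV w) = w.
Proof. move: w; text => x v; move: v; text => y z; by tcomp. Qed.

Lemma INT (X Y Z V V' Z' P1 P2 : bimod) (HX : is_bimod X) (HY : is_bimod Y) (HZ : is_bimod Z)
  (HV : is_bimod V) (HV' : is_bimod V') (HZ' : is_bimod Z') (HP1 : is_bimod P1) (HP2 : is_bimod P2)
  (f : tens X Y -> tens P1 P2) (g : tens Z V -> tens V' Z') (W : tens X (tens Y (tens Z V))) :
  is_hom f -> is_hom g ->
  tmap (aa \o (tmap f id \o aV)) id (aV (tmap id aV (tmap id (tmap id g) W))) =
  aV (tmap id aV (aa (tmap id g (tmap f id (aV W))))).
Proof.
move=> hf hg; move: W; text => x w1; move: w1; text => y w2; move: w2; text => z v; tcomp.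
move: (g (te z v)); text => v' z'; tcomp.
move: (f (te x y)); text => p1 p2; by tcomp.
Qed.
End Gen2.


Section Main.
Variable A : pzRingType.
Variables (C : bimod A) (D : C -> tens C C) (e : C -> Areg A) (M : bimod A)
  (m : tens C M -> tens M C) (xi : tens C M -> C) (delta : tens C M -> tens C (tens M M)).
Hypothesis Hc : is_coring D e.
Hypothesis Hw : is_cowreath D e m xi delta.

Let HC := coring_bimod Hc.
Let HM := robj_bimod (cw_Robj Hw).
Let hD := coring_Dhom Hc.
Let he := coring_ehom Hc.
Let hm := robj_hom (cw_Robj Hw).
Let hxi := cw_xi_hom Hw.
Let hd := cw_delta_hom Hw.
Local Hint Resolve HC HM hD he hm hxi hd : tens.
Local Notation aV := (@tassocV A _ _ _).
Local Notation aa := (@tassoc A _ _ _).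

Lemma hom_rco : is_hom (rco D m).
Proof. have h : is_hom (aV \o (tmap id m \o (aa \o tmap D id)) : tens C M -> _) by tside. exact h. Qed.
Local Hint Resolve hom_rco : tens.

Definition Q (y : tens C (tens M M)) : tens C (tens M (tens C M)) :=
  tmap id aa (tmap id (tmap m id) (tmap id aV (tassoc (tmap D id y)))).
Lemma hom_Q : is_hom Q.
Proof.
have h : is_hom (tmap id aa \o (tmap id (tmap m id) \o (tmap id aV \o (aa \o tmap D id))) : tens C (tens M M) -> _).
  by tside.
exact h.
Qed.
Local Hint Resolve hom_Q : tens.

Local Notation Dp := (cw_comul D m delta).
Lemma hom_Dp : is_hom Dp.
Proof.
have h : is_hom (aV \o (tmap id aa \o (tmap id (tmap m id) \o (tmap id aV \o
   (tmap id delta \o (aa \o tmap D id))))) : tens C M -> _) by tside.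
exact h.
Qed.
Local Hint Resolve hom_Dp : tens.

Lemma formA x : Dp x = tassocV (Q (delta x)).
Proof.
rewrite /cw_comul /Q; have h := cw_delta_lcolin Hw x; rewrite /lco /lco2 in h.
by rewrite h.
Qed.

Lemma SL4 y : tassocV (Q y) = tassoc (tmap (rco D m) id (tassocV y)).
Proof.
rewrite /Q; move: y; text => c w; move: w; text => a b; tcomp.
rewrite /rco; tcomp.
move: (D c); text => c1 c2; tcomp.
move: (m (te c2 a)); text => a' c'; by tcomp.
Qed.

Ltac rR := repeat (rewrite tcompR; [ | tside | tside]).
Ltac rL := repeat (rewrite tcompL; [ | tside | tside]).

Lemma claim3 x : tmap id xi (Dp x) = rco D m x.
Proof.
rewrite /cw_comul SL2; try tside. rR.
rewrite /rco; congr tassocV; apply: tmap_ext => // v; rewrite !compE.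
exact: (cw_counitr Hw v).
Qed.

Lemma claim1 x : tmap xi id (Dp x) = tassoc (tmap D id x).
Proof.
rewrite formA SL4 SL5; try tside. rL.
transitivity (tassoc (tmap (D \o xi) id (tassocV (delta x)))).
  by congr tassoc; apply: tmap_ext => // v; rewrite !compE (cw_xi_rcolin Hw v).
by rewrite -tcompL ?(cw_counitl Hw x); try tside.
Qed.


Lemma counitL x : lunit (tmap (cw_counit e xi) id (Dp x)) = x.
Proof.
rewrite (@tmap_ext _ _ _ _ _ _ (e \o xi) _ id) //.
rewrite -tcompL; try tside.
rewrite claim1 SL6; try tside.
rL.
rewrite (@tmap_ext _ _ _ _ _ _ id _ id) ?tmap_id // => v.
by rewrite !compE (coring_counitl Hc v).
Qed.

Lemma counitR x : runit (tmap id (cw_counit e xi) (Dp x)) = x.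
Proof.
rewrite (@tmap_ext _ _ _ _ _ _ id _ (e \o xi)) //.
rewrite -tcompR; try tside.
rewrite claim3 /rco SL7; try tside.
rR.
rewrite (@tmap_ext _ _ _ _ _ _ id _ (@lunit _ _ \o tmap e id)) //; last first.
  by move=> v; rewrite !compE (robj_counit (cw_Robj Hw) v).
rewrite SL8; try tside.
rL.
rewrite (@tmap_ext _ _ _ _ _ _ id _ id) ?tmap_id // => v.
by rewrite !compE (coring_counitr Hc v).
Qed.

Lemma chom x : tmap xi xi (Dp x) = D (xi x).
Proof. by rewrite tsplit ?claim3 ?(cw_xi_rcolin Hw x); try tside. Qed.

Lemma tmap_extR (X Y X' Y' : bimod A) (f : X -> X') (g g' : Y -> Y') u :
  (forall y, g y = g' y) -> tmap f g u = tmap f g' u.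
Proof. by move=> h; apply: tmap_ext. Qed.
Lemma tmap_extL (X Y X' Y' : bimod A) (f f' : X -> X') (g : Y -> Y') u :
  (forall x, f x = f' x) -> tmap f g u = tmap f' g u.
Proof. by move=> h; apply: tmap_ext. Qed.

Definition Kp (w : tens (tens C (tens M M)) M) : tens M (tens (tens C M) (tens C M)) :=
  tmap id (aV \o Q) (aa (tmap m id (aV (tmap id aa (aa w))))).
Lemma hom_Kp : is_hom Kp.
Proof.
have h : is_hom (tmap id (aV \o Q) \o (aa \o (tmap m id \o (aV \o (tmap id aa \o aa))))
  : tens (tens C (tens M M)) M -> _) by tside.
exact h.
Qed.
Local Hint Resolve hom_Kp : tens.

Definition Rr (v : tens C M) : tens (tens C (tens M M)) M := tmap delta id (aV (delta v)).
Lemma hom_Rr : is_hom Rr.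
Proof. have h : is_hom (tmap delta id \o (aV \o delta) : tens C M -> _) by tside. exact h. Qed.
Local Hint Resolve hom_Rr : tens.

Lemma hom_rco2 : is_hom (rco2 D m).
Proof.
have h : is_hom (aV \o (tmap id aV \o (tmap id (tmap id m) \o (tmap id aa \o
  (tmap id (tmap m id) \o (tmap id aV \o (aa \o tmap D id)))))) : tens C (tens M M) -> _) by tside.
exact h.
Qed.
Local Hint Resolve hom_rco2 : tens.

Definition Gg := tmap (aV \o Q) id \o rco2 D m.
Lemma hom_Gg : is_hom Gg.
Proof. rewrite /Gg; tside. Qed.
Local Hint Resolve hom_Gg : tens.

Lemma SL3 (f : tens C M -> tens C (tens M M)) (y : tens C (tens M M)) : is_hom f ->
  tmap id (tmap f id \o aV) (aa (tmap D id y)) = aa (tmap (tmap id f \o (aa \o tmap D id)) id (aV y)).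
Proof.
move=> hf; move: y; text => c w; move: w; text => a b; tcomp.
move: (D c); text => c1 c2; by tcomp.
Qed.

Lemma Dp_def x : Dp x = aV (tmap id aa (tmap id (tmap m id) (tmap id aV (tmap id delta (aa (tmap D id x)))))).
Proof. by []. Qed.

Lemma RHSnf x : tmap id Dp (Dp x) = aV (tmap id Kp (aa (tmap (aa \o tmap D id) id (Rr x)))).
Proof.
rewrite (Dp_def x) SL2; try tside. rR.
rewrite (@tmap_extR _ _ _ _ _ _ (Kp \o Rr)) //; last first.
  move=> v; rewrite !compE.
  rewrite (@tmap_extR _ _ _ _ _ _ ((aV \o Q) \o delta)) //; last first.
    by move=> z; rewrite formA.
  rewrite -tcompR; try tside.
  by rewrite -(cw_coassoc Hw v).
rewrite -tcompR; try tside.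
rewrite (@tmap_extR _ _ _ _ _ _ ((tmap delta id \o aV) \o delta)) //.
rewrite -tcompR; try tside.
have h := cw_delta_lcolin Hw x; rewrite /lco /lco2 in h; rewrite h.
rewrite SL3; try tside.
rewrite (@tmap_extL _ _ _ _ _ ((aa \o tmap D id) \o delta)) //; last first.
  by move=> v; rewrite !compE; have h' := cw_delta_lcolin Hw v; rewrite /lco /lco2 in h'.
by rewrite -tcompL; try tside.
Qed.

Lemma LHSnf x : aa (tmap Dp id (Dp x)) = aa (aa (tmap Gg id (Rr x))).
Proof.
rewrite formA SL4 SL5; try tside. rL.
rewrite (@tmap_extL _ _ _ _ _ (Gg \o delta)) //; last first.
  move=> v; rewrite !compE.
  rewrite (@tmap_extL _ _ _ _ _ ((aV \o Q) \o delta)) //; last first.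
    by move=> z; rewrite formA.
  rewrite -tcompL; try tside.
  by rewrite (cw_delta_rcolin Hw v).
all: try (rewrite -tcompL; try tside).
Qed.

Lemma Q_def y : Q y = tmap id aa (tmap id (tmap m id) (tmap id aV (aa (tmap D id y)))).
Proof. by []. Qed.
Lemma Kp_def w : Kp w = tmap id (aV \o Q) (aa (tmap m id (aV (tmap id aa (aa w))))).
Proof. by []. Qed.

Ltac tc := tcomp; repeat (first [rewrite Q_def | rewrite Kp_def]; tcomp).
Ltac gen_any := match goal with
  | |- context [m ?x] => move: (m x); text => ? ?; tc
  | |- context [D ?x] => move: (D x); text => ? ?; tc
  end.

Definition Wf : tens C (tens M M) -> tens C (tens M (tens C M)) :=
  tmap id aa \o (tmap id (tmap m id) \o (tmap id aV \o (aa \o tmap D id))).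
Lemma hom_Wf : is_hom Wf. Proof. rewrite /Wf; tside. Qed.
Local Hint Resolve hom_Wf : tens.
Definition Gg2 : tens C (tens M M) -> tens (tens (tens C M) (tens C M)) C :=
  aV \o (tmap id aV \o (aa \o (tmap id m \o (tmap (rco D m) id \o (aV \o Wf))))).
Lemma hom_Gg2 : is_hom Gg2. Proof. rewrite /Gg2; tside. Qed.
Local Hint Resolve hom_Gg2 : tens.

Lemma Gg_Gg2 y : Gg y = Gg2 y.
Proof.
rewrite /Gg /Gg2 /rco2 !compE.
rewrite (@tmap_extL _ _ _ _ _ (aa \o (tmap (rco D m) id \o aV))); last first.
  by move=> z; rewrite !compE SL4.
rewrite INT; try tside.
Qed.

Definition qf (b d : M) : tens C C -> tens (tens C M) (tens C M) :=
  aV \o (tmap id aa \o (tmap id (tmap m id) \o (tmap id aV \o (aa \o (fun u => te u (te b d)))))).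
Lemma ladd_qf b d : ladd (qf b d). Proof. rewrite /qf; tside. Qed.
Local Hint Resolve ladd_qf : tens.
Definition k2 (a b d : M) : tens C C -> tens M (tens (tens C M) (tens C M)) :=
  tmap id (qf b d) \o (aa \o (tmap m id \o (aV \o (tmap id m \o (aa \o (fun u => te u a)))))).
Lemma ladd_k2 a b d : ladd (k2 a b d). Proof. rewrite /k2; tside. Qed.
Local Hint Resolve ladd_k2 : tens.

Lemma Kp_te c2 a b d : Kp (te (te c2 (te a b)) d) = k2 a b d (D c2).
Proof.
rewrite Kp_def; tcomp.
rewrite tassoc_te; try tside.
rewrite tcompR; try tside.
rewrite (@tmap_extR _ _ _ _ _ _ (qf b d \o D)); last first.
  by move=> c'; rewrite !compE Q_def /qf; tcomp.
rewrite -tcompR; try tside.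
rewrite (robj_comul (cw_Robj Hw)) /k2; tcomp; done.
Qed.

Definition rcp : tens (tens C C) M -> tens (tens C M) C := aV \o (tmap id m \o aa).
Lemma hom_rcp : is_hom rcp. Proof. rewrite /rcp; tside. Qed.
Local Hint Resolve hom_rcp : tens.

Definition Lf (a b d : M) : tens C (tens C C) -> tens (tens C M) (tens (tens C M) (tens C M)) :=
  aa \o (aa \o ((fun z => te z d) \o (aV \o (tmap id aV \o (aa \o (tmap id m \o (tmap rcp id \o
  (aV \o (tmap id aa \o (tmap id (tmap m id) \o (tmap id aV \o (aa \o ((fun v => te v (te a b)) \o aV))))))))))))).

Ltac tc2 := tcomp; repeat (first [rewrite tassocVK; [|tside..] | rewrite tassocK; [|tside..]]; tcomp).

Ltac gen2 := match goal with
  | |- context [m ?x] => move: (m x); text => ? ?; tc2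
  | |- context [D ?x] => move: (D x); text => ? ?; tc2
  end.

Lemma FinalU a b d U : Lf a b d U = aV (tmap id (k2 a b d) U).
Proof.
rewrite /Lf /k2 /rcp /qf; move: U; text => c1 w; move: w; text => c2 c3; tc2.
repeat gen2; done.
Qed.

Lemma Final w : aa (aa (tmap Gg id w)) = aV (tmap id Kp (aa (tmap (aa \o tmap D id) id w))).
Proof.
rewrite (@tmap_extL _ _ _ _ _ Gg2); last exact: Gg_Gg2.
move: w; text => y d; move: y; text => c v; move: v; text => a b; tcomp.
rewrite /Gg2 /Wf; tcomp.
have -> : aV (tmap id Kp (aa (te (aa (te (D c) (te a b))) d))) = aV (tmap id (k2 a b d \o D) (D c)).
  move: (D c); text => c1 c2; tcomp; by rewrite Kp_te.
rewrite -tcompR; try tside.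
rewrite -(coring_coassoc Hc c) -FinalU /Lf /rcp /rco.
move: (D c); text => c1 c2; tc2.
repeat gen2; done.
Qed.

Lemma coassocDp x : tassoc (tmap Dp id (Dp x)) = tmap id Dp (Dp x).
Proof. by rewrite LHSnf RHSnf Final. Qed.

Lemma main_result : is_coring Dp (cw_counit e xi) /\ is_coring_hom Dp (cw_counit e xi) D e xi.
Proof.
split; split.
- exact: tens_bimod.
- exact: hom_Dp.
- have h : is_hom (e \o xi) by tside. exact h.
- exact: coassocDp.
- exact: counitL.
- exact: counitR.
- exact: hxi.
- by [].
- exact: chom.
Qed.
End Main.

Unset Implicit Arguments.
Theorem proposition3p3 (A : pzRingType) (C : bimod A) (D : C -> tens C C)
    (e : C -> Areg A) (M : bimod A) (m : tens C M -> tens M C)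
    (xi : tens C M -> C) (delta : tens C M -> tens C (tens M M)) :
  is_coring D e ->
  is_cowreath D e m xi delta ->
  is_coring (cw_comul D m delta) (cw_counit e xi) /\
  is_coring_hom (cw_comul D m delta) (cw_counit e xi) D e xi.
Proof. move=> Hc Hw; exact: (main_result Hc Hw). Qed.
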